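(* For every $k\in\{0,\dots,K\}$ with $\sigma_k<\lceil qn\rceil$, the function $\Psi_k^{\mathrm{BSAA}}$ is strictly positive on $(0,q)$ and on $(q,1)$, and $\log\Psi_k^{\mathrm{BSAA}}$ is strictly concave on $(0,q)$ and strictly concave on $(q,1)$ (i.e., $\Psi_k^{\mathrm{BSAA}}$ is strictly log-concave when restricted to $[0,q]$ and when restricted to $[q,1]$).
   Context: Fix $c_u,c_o>0$ and $q=c_u/(c_u+c_o)\in(0,1)$. Fix $K\ge1$, $\bm n=(n_1,\dots,n_K)\in\mathbb N^K$, $n=\sum_k n_k$, $\sigma_k=\sum_{\ell=1}^k n_\ell$ ($\sigma_0=0$). $B_{r,m}(p)=\sum_{j=r}^m\binom mj p^j(1-p)^{m-j}$ (with $B_{r,m}\equiv1$ if $r<0$). For $v\in[0,1]$, $\Psi_k^{\mathrm{BSAA}}(v)=\big(1-B_{\lceil qn\rceil-\sigma_k,\,n-\sigma_k}(v)\big)(v-q)+(q-v)^+$, where $y^+=\max\{y,0\}$. *)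

(* Defs.v *)
From HB Require Import structures.
From mathcomp Require Import all_boot all_order all_algebra.
From mathcomp Require Import all_classical all_reals all_analysis.
Set Implicit Arguments. Unset Strict Implicit. Unset Printing Implicit Defensive.
Import Order.TTheory GRing.Theory Num.Theory.
Local Open Scope ring_scope.

Definition Bbin {R : realType} (r : int) (m : nat) (p : R) : R :=
  if (r < 0)%R then 1
  else \sum_(j < m.+1 | (r <= j%:Z)%R) ('C(m, j))%:R * p ^+ j * (1 - p) ^+ (m - j).

(* sigma_k = n_1 + ... + n_k ; ns i (i : 'I_K, 0-indexed) is n_{i+1} *)
Definition sigma {K : nat} (ns : 'I_K -> nat) (k : nat) : nat :=
  \sum_(i < K | (i < k)%N) ns i.

Definition ntot {K : nat} (ns : 'I_K -> nat) : nat := \sum_(i < K) ns i.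

Definition PsiBSAA {R : realType} (q : R) {K : nat} (ns : 'I_K -> nat) (k : nat)
  (v : R) : R :=
  (1 - Bbin (Num.ceil (q * (ntot ns)%:R) - (sigma ns k)%:Z)
            (ntot ns - sigma ns k) v) * (v - q) + Num.max (q - v) 0.

Definition strictly_concave_on {R : realType} (f : R -> R) (a b : R) : Prop :=
  forall x y t : R, a < x < b -> a < y < b -> x != y -> 0 < t < 1 ->
    t * f x + (1 - t) * f y < f (t * x + (1 - t) * y).

(* Main.v *)
Require Import Defs.
From HB Require Import structures.
From mathcomp Require Import all_boot all_order all_algebra.
From mathcomp Require Import all_classical all_reals all_analysis.
From mathcomp Require Import ring lra zify.
Import Order.TTheory GRing.Theory Num.Theory.
Local Open Scope ring_scope.

Lemma conv_in (R : realType) (a b x y t : R) : a < x < b -> a < y < b -> 0 < t < 1 ->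
  a < t * x + (1 - t) * y < b.
Proof.
move=> /andP[ax xb] /andP[ay yb] /andP[t0 t1].
have t1' : 0 < 1 - t by rewrite subr_gt0.
apply/andP; split; rewrite -subr_gt0.
  have -> : t * x + (1 - t) * y - a = t * (x - a) + (1 - t) * (y - a) by ring.
  by rewrite addr_gt0 // mulr_gt0 // subr_gt0.
have -> : b - (t * x + (1 - t) * y) = t * (b - x) + (1 - t) * (b - y) by ring.
by rewrite addr_gt0 // mulr_gt0 // subr_gt0.
Qed.

Lemma sc_ext (R : realType) (f g : R -> R) a b :
  (forall x, a < x < b -> f x = g x) -> strictly_concave_on g a b ->
  strictly_concave_on f a b.
Proof.
move=> E H x y t hx hy xy ht.
rewrite !E //; last exact: conv_in.
exact: H.
Qed.

Lemma sc_deriv (R : realType) (f df : R -> R) (a b : R) :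
  (forall x, a < x < b -> is_derive x 1 f (df x)) ->
  (forall x y, a < x -> x < y -> y < b -> df y < df x) ->
  strictly_concave_on f a b.
Proof.
move=> Hd Hm.
have key : forall x y t, a < x < b -> a < y < b -> x < y -> 0 < t < 1 ->
    t * f x + (1 - t) * f y < f (t * x + (1 - t) * y).
  move=> x y t /andP[ax xb] /andP[ay yb] xy /andP[t0 t1].
  set z := t * x + (1 - t) * y.
  have xz : x < z.
    rewrite /z -subr_gt0.
    have -> : t * x + (1 - t) * y - x = (1 - t) * (y - x) by ring.
    by rewrite mulr_gt0 // subr_gt0.
  have zy : z < y.
    rewrite /z -subr_gt0.
    have -> : y - (t * x + (1 - t) * y) = t * (y - x) by ring.
    by rewrite mulr_gt0 // subr_gt0.
  have dif : forall w, a < w < b -> derivable f w 1.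
    by move=> w /Hd [].
  have dif2 : forall u v, a < u -> v < b -> {in `[u, v], forall w, derivable f w 1}.
    move=> u v au vb w.
    rewrite in_itv /= => /andP[uw wv]; apply: dif.
    by rewrite (lt_le_trans au uw) (le_lt_trans wv vb).
  have cont := fun u v au vb => derivable_within_continuous (dif2 u v au vb).
  have [c1 c1i E1] := MVT xz (fun w hw => Hd w (ltac:(
     move: hw; rewrite in_itv /= => /andP[h1 h2];
     by rewrite (lt_trans ax h1) (lt_trans h2 (lt_trans zy yb))))) (cont _ _ ax (lt_trans zy yb)).
  have [c2 c2i E2] := MVT zy (fun w hw => Hd w (ltac:(
     move: hw; rewrite in_itv /= => /andP[h1 h2];
     by rewrite (lt_trans (lt_trans ax xz) h1) (lt_trans h2 yb)))) (cont _ _ (lt_trans ax xz) yb).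
  move: c1i c2i; rewrite !in_itv /= => /andP[xc1 c1z] /andP[zc2 c2y].
  have hlt : df c2 < df c1.
    apply: Hm; first exact: lt_trans ax xc1.
      exact: lt_trans c1z zc2.
    exact: lt_trans c2y yb.
  have -> : t * f x + (1 - t) * f y =
    f z - t * (1 - t) * (y - x) * (df c1 - df c2).
    have -> : f x = f z - df c1 * (z - x) by rewrite -E1; ring.
    have -> : f y = f z + df c2 * (y - z) by rewrite -E2; ring.
    rewrite /z; ring.
  rewrite gtrDl oppr_lt0 mulr_gt0 ?subr_gt0 // mulr_gt0 ?subr_gt0 //.
  by rewrite mulr_gt0 ?subr_gt0.
move=> x y t hx hy /negPf xy ht.
case: (ltgtP x y) xy => // [xy|yx] _; first exact: key.
have ht' : 0 < 1 - t < 1.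
  by move/andP: ht => [t0 t1]; rewrite subr_gt0 t1 /= ltrBlDr ltrDl.
have := key y x (1 - t) hy hx yx ht'.
have -> : 1 - (1 - t) = t by ring.
by rewrite addrC (addrC ((1 - t) * y)).
Qed.


Lemma der_pow {R : realType} (n : nat) (v : R) :
  is_derive v 1 (fun x : R => x ^+ n) (n%:R * v ^+ n.-1).
Proof.
have := @is_deriveX R R (@id R) n v 1 1 (is_derive_id _ _).
by rewrite /= scaler1 -exprfctE.
Qed.

Lemma der_pow1 {R : realType} (n : nat) (v : R) :
  is_derive v 1 (fun x : R => (1 - x) ^+ n) (- (n%:R * (1 - v) ^+ n.-1)).
Proof.
have h : is_derive v 1 (fun x : R => 1 - x) (-1).
  have := @is_deriveB R R R (cst 1) id v 1 0 1 (is_derive_cst _ _ _) (is_derive_id _ _).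
  by rewrite sub0r.
have := @is_deriveX R R (fun x : R => 1 - x) n v 1 (-1) h.
by rewrite scalerN /GRing.scale /= mulr1 exprfctE.
Qed.

Lemma der_mul {R : realType} {f g : R -> R} {v df dg : R} :
  is_derive v 1 f df -> is_derive v 1 g dg ->
  is_derive v 1 (fun x => f x * g x) (f v * dg + g v * df).
Proof. by move=> hf hg; have := is_deriveM hf hg. Qed.

Definition Tm {R : realType} (m j : nat) (v : R) : R :=
  ('C(m, j))%:R * v ^+ j * (1 - v) ^+ (m - j).
Definition aa {R : realType} (m j : nat) (v : R) : R :=
  (j * 'C(m, j))%:R * v ^+ j.-1 * (1 - v) ^+ (m - j).

Lemma Tm_deriv {R : realType} (m j : nat) (v : R) :
  is_derive v 1 (Tm m j) (aa m j v - aa m j.+1 v).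
Proof.
have h1 := der_mul (is_derive_cst (('C(m, j))%:R : R) v 1) (der_pow j v).
have h2 := der_mul h1 (der_pow1 (m - j) v).
apply: is_derive_eq h2 _.
rewrite /aa mul_bin_left subnS !natrM /=.
ring.
Qed.

Definition Bs {R : realType} (m r : nat) (v : R) : R :=
  \sum_(j < m.+1 | (r <= j)%N) Tm m j v.

Lemma tele {R : realType} (u : nat -> R) (r N : nat) :
  \sum_(j < N) (if (r <= j)%N then u j - u j.+1 else 0) =
  if (r <= N)%N then u r - u N else 0.
Proof.
elim: N => [|N IH]; first by rewrite big_ord0; case: r => //=; rewrite subrr.
rewrite big_ord_recr /= IH.
have [rN|Nr] := leqP r N.
  by rewrite (leq_trans rN (leqnSn N)) addrA subrK.
rewrite addr0; case: leqP => h //.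
have E : r = N.+1 by apply/eqP; rewrite eqn_leq h Nr.
by rewrite E subrr.
Qed.

Lemma Bs_deriv {R : realType} (m r : nat) (v : R) : (r <= m)%N ->
  is_derive v 1 (Bs m r) (aa m r v).
Proof.
move=> rm.
have -> : Bs m r = \sum_(j < m.+1) (fun x : R => if (r <= j)%N then Tm m j x else 0).
  by apply/funext => x; rewrite fct_sumE /Bs big_mkcond.
apply: is_derive_eq.
  apply: (is_derive_sum (dh := fun j : 'I_m.+1 =>
     if (r <= j)%N then aa m j v - aa m j.+1 v else 0)) => j.
  case: ifP => _; [exact: Tm_deriv | exact: is_derive_cst].
rewrite (tele (fun j => aa m j v) r m.+1) ltnW ?ltnS //.
by rewrite /aa /= (@bin_small m m.+1) // muln0 mul0r mul0r subr0.
Qed.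

From mathcomp Require Import zify lra.

Lemma Bbin_Bs {R : realType} (r m : nat) (v : R) : Bbin (Posz r) m v = Bs m r v.
Proof.
rewrite /Bbin /Bs ltNge le0z_nat /=.
by apply: eq_bigl => j; rewrite lez_nat.
Qed.

Lemma sum_all {R : realType} (m : nat) (v : R) : \sum_(j < m.+1) Tm m j v = 1.
Proof.
have := exprDn (1 - v) v m.
rewrite subrK expr1n => ->.
apply: eq_bigr => j _; rewrite /Tm -mulr_natl; ring.
Qed.

Lemma Fs_eq {R : realType} (m r : nat) (v : R) :
  1 - Bs m r v = \sum_(j < m.+1 | ~~ (r <= j)%N) Tm m j v.
Proof.
by rewrite -(sum_all m v) (bigID (fun j : 'I_m.+1 => (r <= j)%N)) /= /Bs addrC addrK.
Qed.

Lemma Tm_ge0 {R : realType} (m j : nat) (v : R) : 0 < v < 1 -> 0 <= Tm m j v.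
Proof.
move=> /andP[v0 v1]; rewrite /Tm mulr_ge0 // ?mulr_ge0 // ?exprn_ge0 // ?ltW //.
by rewrite subr_gt0.
Qed.

Lemma Tm_gt0 {R : realType} (m j : nat) (v : R) : (j <= m)%N -> 0 < v < 1 -> 0 < Tm m j v.
Proof.
move=> jm /andP[v0 v1]; rewrite /Tm mulr_gt0 // ?mulr_gt0 // ?exprn_gt0 // ?subr_gt0 //.
by rewrite ltr0n bin_gt0.
Qed.

Lemma Bs_gt0 {R : realType} (m r : nat) (v : R) : (r <= m)%N -> 0 < v < 1 -> 0 < Bs m r v.
Proof.
move=> rm hv; rewrite /Bs (bigD1 ord_max) //=.
by rewrite ltr_wpDr ?Tm_gt0 // sumr_ge0 // => j _; apply: Tm_ge0.
Qed.

Lemma Fs_gt0 {R : realType} (m r : nat) (v : R) : (0 < r)%N -> 0 < v < 1 -> 0 < 1 - Bs m r v.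
Proof.
move=> r0 hv; rewrite Fs_eq (bigD1 ord0) /= -?ltnNge //.
by rewrite ltr_wpDr ?Tm_gt0 // sumr_ge0 // => j _; apply: Tm_ge0.
Qed.

Lemma aa_gt0 {R : realType} (m r : nat) (v : R) : (0 < r)%N -> (r <= m)%N -> 0 < v < 1 ->
  0 < aa m r v.
Proof.
move=> r0 rm /andP[v0 v1]; rewrite /aa mulr_gt0 // ?mulr_gt0 // ?exprn_gt0 // ?subr_gt0 //.
by rewrite ltr0n muln_gt0 r0 bin_gt0.
Qed.

Lemma mono_aux {R : realType} (c : R) (a b : nat) (x y : R) :
  0 <= c -> 0 < x -> x <= y -> y < 1 ->
  c * (x ^+ a / (1 - x) ^+ b) <= c * (y ^+ a / (1 - y) ^+ b).
Proof.
move=> c0 x0 xy y1.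
have y0 : 0 < y by exact: lt_le_trans xy.
have px : 0 < 1 - x by rewrite subr_gt0 (le_lt_trans xy).
have py : 0 < 1 - y by rewrite subr_gt0.
apply: ler_wpM2l => //; apply: ler_pM.
- by rewrite exprn_ge0 // ltW.
- by rewrite invr_ge0 exprn_ge0 // ltW.
- by rewrite lerXn2r // ?nnegrE ltW.
rewrite lef_pV2 ?posrE ?exprn_gt0 //.
by apply: lerXn2r; rewrite ?nnegrE; lra.
Qed.

Lemma mono_aux2 {R : realType} (c : R) (a b : nat) (x y : R) :
  0 <= c -> 0 < x -> x <= y -> y < 1 ->
  c * ((1 - y) ^+ a / y ^+ b) <= c * ((1 - x) ^+ a / x ^+ b).
Proof.
move=> c0 x0 xy y1.
have y0 : 0 < y by exact: lt_le_trans xy.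
have px : 0 < 1 - x by rewrite subr_gt0 (le_lt_trans xy).
have py : 0 < 1 - y by rewrite subr_gt0.
apply: ler_wpM2l => //; apply: ler_pM.
- by rewrite exprn_ge0 // ltW.
- by rewrite invr_ge0 exprn_ge0 // ltW.
- by apply: lerXn2r; rewrite ?nnegrE; lra.
rewrite lef_pV2 ?posrE ?exprn_gt0 //.
by rewrite lerXn2r // ?nnegrE ltW.
Qed.

Lemma TmB_eq {R : realType} (m r j : nat) (v : R) :
  (0 < r)%N -> (r <= j)%N -> (j <= m)%N -> 0 < v < 1 ->
  Tm m j v / aa m r v =
  ('C(m, j)%:R / (r * 'C(m, r))%:R) * (v ^+ (j - r.-1) / (1 - v) ^+ (j - r)).
Proof.
move=> r0 rj jm /andP[v0 v1].
have E1 : v ^+ j = v ^+ r.-1 * v ^+ (j - r.-1) by rewrite -exprD; congr (_ ^+ _); lia.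
have E2 : (1 - v) ^+ (m - r) = (1 - v) ^+ (m - j) * (1 - v) ^+ (j - r)
  by rewrite -exprD; congr (_ ^+ _); lia.
have n1 : v ^+ r.-1 != 0 by rewrite expf_neq0 // gt_eqF.
have n2 : (1 - v) ^+ (m - j) != 0 by rewrite expf_neq0 // gt_eqF // subr_gt0.
have n3 : (1 - v) ^+ (j - r) != 0 by rewrite expf_neq0 // gt_eqF // subr_gt0.
have n5 : 'C(m, r)%:R != 0 :> R by rewrite pnatr_eq0 -lt0n bin_gt0 (leq_trans rj jm).
have n6 : r%:R != 0 :> R by rewrite pnatr_eq0 -lt0n.
rewrite /Tm /aa E1 E2.
field.
by rewrite n1 n2 n3 n5 n6.
Qed.

Lemma TmF_eq {R : realType} (m r j : nat) (v : R) :
  (0 < r)%N -> (j < r)%N -> (r <= m)%N -> 0 < v < 1 ->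
  Tm m j v / aa m r v =
  ('C(m, j)%:R / (r * 'C(m, r))%:R) * ((1 - v) ^+ (r - j) / v ^+ (r.-1 - j)).
Proof.
move=> r0 rj jm /andP[v0 v1].
have E1 : v ^+ r.-1 = v ^+ j * v ^+ (r.-1 - j) by rewrite -exprD; congr (_ ^+ _); lia.
have E2 : (1 - v) ^+ (m - j) = (1 - v) ^+ (m - r) * (1 - v) ^+ (r - j)
  by rewrite -exprD; congr (_ ^+ _); lia.
have n1 : v ^+ j != 0 by rewrite expf_neq0 // gt_eqF.
have n1' : v ^+ (r.-1 - j) != 0 by rewrite expf_neq0 // gt_eqF.
have n2 : (1 - v) ^+ (m - r) != 0 by rewrite expf_neq0 // gt_eqF // subr_gt0.
have n5 : 'C(m, r)%:R != 0 :> R by rewrite pnatr_eq0 -lt0n bin_gt0.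
have n6 : r%:R != 0 :> R by rewrite pnatr_eq0 -lt0n.
rewrite /Tm /aa E1 E2.
field.
by rewrite n1 n1' n2 n5 n6.
Qed.

Lemma ratioB {R : realType} (m r : nat) (x y : R) :
  (0 < r)%N -> (r <= m)%N -> 0 < x -> x <= y -> y < 1 ->
  Bs m r x / aa m r x <= Bs m r y / aa m r y.
Proof.
move=> r0 rm x0 xy y1.
have hx : 0 < x < 1 by rewrite x0 (le_lt_trans xy).
have hy : 0 < y < 1 by rewrite y1 (lt_le_trans x0).
rewrite /Bs !mulr_suml; apply: ler_sum => j rj.
have jm : (j <= m)%N by rewrite -ltnS.
by rewrite !TmB_eq //; apply: mono_aux => //; rewrite divr_ge0.
Qed.

Lemma ratioF {R : realType} (m r : nat) (x y : R) :
  (0 < r)%N -> (r <= m)%N -> 0 < x -> x <= y -> y < 1 ->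
  (1 - Bs m r y) / aa m r y <= (1 - Bs m r x) / aa m r x.
Proof.
move=> r0 rm x0 xy y1.
have hx : 0 < x < 1 by rewrite x0 (le_lt_trans xy).
have hy : 0 < y < 1 by rewrite y1 (lt_le_trans x0).
rewrite !Fs_eq !mulr_suml; apply: ler_sum => j; rewrite -ltnNge => rj.
by rewrite !TmF_eq //; apply: mono_aux2 => //; rewrite divr_ge0.
Qed.

Lemma der_lin {R : realType} (q s : R) (v : R) :
  is_derive v 1 (fun x : R => q + s * x) s.
Proof.
have := @is_deriveD R R R (cst q) (fun x => s * x) v 1 0 (s * 1) (is_derive_cst _ _ _)
  (@is_deriveZ R R R id s v 1 1 (is_derive_id _ _)).
by rewrite add0r mulr1.
Qed.

Lemma der_ln {R : realType} (G : R -> R) (x dG : R) : 0 < G x ->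
  is_derive x 1 G dG -> is_derive x 1 (fun v => ln (G v)) ((G x)^-1 * dG).
Proof.
move=> Gx hG.
exact: (is_derive1_comp (is_derive1_ln Gx) hG).
Qed.

Lemma scB {R : realType} (q : R) (m r : nat) :
  (0 < r)%N -> (r <= m)%N -> q <= 1 ->
  strictly_concave_on (fun v => ln ((q - v) * Bs m r v)) 0 q.
Proof.
move=> r0 rm q1.
have hv : forall v, 0 < v < q -> 0 < v < 1.
  by move=> v /andP[v0 vq]; rewrite v0 (lt_le_trans vq).
apply: (@sc_deriv R _ (fun v => - (q - v)^-1 + (Bs m r v / aa m r v)^-1))...
  move=> v hvq.
  have Gx : 0 < (q - v) * Bs m r v.
    by rewrite mulr_gt0 ?Bs_gt0 ?hv // subr_gt0; case/andP: hvq.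
  have hq : is_derive v 1 (fun x : R => q - x) (-1).
    by have := der_lin q (-1) v; under eq_fun do rewrite mulN1r.
  apply: is_derive_eq.
    exact: (@der_ln R (fun x => (q - x) * Bs m r x) v _ Gx (der_mul hq (Bs_deriv m r v rm))).
  have qv : 0 < q - v by rewrite subr_gt0; case/andP: hvq.
  have h2 := Bs_gt0 m r v rm (hv v hvq); have h1 := aa_gt0 m r v r0 rm (hv v hvq).
  field.
  by rewrite (lt0r_neq0 h1) (lt0r_neq0 h2) (lt0r_neq0 qv).
move=> x y x0 xy yq.
have hx : 0 < x < q by rewrite x0 (lt_trans xy).
have hy : 0 < y < q by rewrite yq (lt_trans x0).
apply: ltr_leD.
  rewrite ltrN2 ltf_pV2 ?posrE ?subr_gt0 //; last exact: lt_trans xy yq.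
  by rewrite ltrD2l ltrN2.
rewrite lef_pV2 ?posrE ?divr_gt0 ?Bs_gt0 ?aa_gt0 ?hv //.
by apply: ratioB => //; [exact: ltW | case/andP: (hv y hy)].
Qed.

Lemma scF {R : realType} (q : R) (m r : nat) :
  (0 < r)%N -> (r <= m)%N -> 0 <= q ->
  strictly_concave_on (fun v => ln ((v - q) * (1 - Bs m r v))) q 1.
Proof.
move=> r0 rm q0.
have hv : forall v, q < v < 1 -> 0 < v < 1.
  by move=> v /andP[qv v1]; rewrite v1 (le_lt_trans q0 qv).
apply: (@sc_deriv R _ (fun v => (v - q)^-1 - ((1 - Bs m r v) / aa m r v)^-1)).
  move=> v hvq.
  have qv : 0 < v - q by rewrite subr_gt0; case/andP: hvq.
  have h2 := Fs_gt0 m r v r0 (hv v hvq); have h1 := aa_gt0 m r v r0 rm (hv v hvq).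
  have Gx : 0 < (v - q) * (1 - Bs m r v) by rewrite mulr_gt0.
  have hq : is_derive v 1 (fun x : R => x - q) 1.
    by have := der_lin (- q) 1 v; under eq_fun do rewrite mul1r addrC.
  have hF : is_derive v 1 (fun x : R => 1 - Bs m r x) (- aa m r v).
    have := @is_deriveB R R R (cst 1) (Bs m r) v 1 0 _ (is_derive_cst _ _ _) (Bs_deriv m r v rm).
    by rewrite sub0r.
  apply: is_derive_eq.
    exact: (@der_ln R (fun x => (x - q) * (1 - Bs m r x)) v _ Gx (der_mul hq hF)).
  rewrite /=; field.
  by rewrite (lt0r_neq0 h1) (lt0r_neq0 h2) (lt0r_neq0 qv).
move=> x y qx xy y1.
have hx : q < x < 1 by rewrite qx (lt_trans xy).
have hy : q < y < 1 by rewrite y1 (lt_trans qx).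
apply: ltr_leD.
  rewrite ltf_pV2 ?posrE ?subr_gt0 //; last exact: lt_trans xy.
  by rewrite ltrD2r.
rewrite lerN2 lef_pV2 ?posrE ?divr_gt0 ?Fs_gt0 ?aa_gt0 ?hv //.
by apply: ratioF => //; [case/andP: (hv x hx) | exact: ltW].
Qed.


Theorem lemma3 (R : realType) (cu co : R) (K : nat) (ns : 'I_K -> nat) (k : nat) :
  0 < cu -> 0 < co -> (forall i, (0 < ns i)%N) ->
  let q := cu / (cu + co) in
  (k <= K)%N ->
  ((sigma ns k)%:Z < Num.ceil (q * (ntot ns)%:R))%R ->
  (forall v : R, 0 < v < q -> 0 < PsiBSAA q ns k v) /\
  (forall v : R, q < v < 1 -> 0 < PsiBSAA q ns k v) /\
  strictly_concave_on (fun v => ln (PsiBSAA q ns k v)) 0 q /\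
  strictly_concave_on (fun v => ln (PsiBSAA q ns k v)) q 1.
Proof.
move=> cu0 co0 _ q _ hc.
have cc0 : 0 < cu + co by rewrite addr_gt0.
have q0 : 0 < q by rewrite /q divr_gt0.
have q1 : q < 1 by rewrite /q ltr_pdivrMr // mul1r ltrDl.
set n := ntot ns in hc *.
set s := sigma ns k in hc *.
set c := Num.ceil (q * n%:R) in hc *.
have cn : c <= n%:Z.
  rewrite /c ceil_le_int; rewrite -[X in _ <= X]mul1r.
  by rewrite ler_wpM2r ?ler0n ?ltW.
have [rr Erc] : exists rr : nat, c = rr%:Z.
  have c0 : 0 <= c by apply: le_trans (ltW hc).
  by exists `|c|%N; rewrite gez0_abs.
move: hc cn; rewrite Erc ltz_nat lez_nat => sr rn.
set r := (rr - s)%N.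
set m := (n - s)%N.
have r0 : (0 < r)%N by rewrite /r subn_gt0.
have rm : (r <= m)%N by rewrite /r /m leq_sub2r.
have Erz : c - s%:Z = r%:Z by rewrite Erc subzn // ltnW.
have PsiE : forall v, PsiBSAA q ns k v =
    (1 - Bs m r v) * (v - q) + Num.max (q - v) 0.
  by move=> v; rewrite /PsiBSAA -/n -/s -/c Erz Bbin_Bs.
have E1 : forall v, 0 < v < q -> PsiBSAA q ns k v = (q - v) * Bs m r v.
  move=> v /andP[v0 vq]; rewrite PsiE max_l; last by rewrite subr_ge0 ltW.
  ring.
have E2 : forall v, q < v < 1 -> PsiBSAA q ns k v = (v - q) * (1 - Bs m r v).
  move=> v /andP[qv v1]; rewrite PsiE max_r; last by rewrite subr_le0 ltW.
  ring.
split; [|split; [|split]].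
- move=> v hv; rewrite E1 //; case/andP: hv => v0 vq.
  by rewrite mulr_gt0 ?subr_gt0 // Bs_gt0 // v0 (lt_trans vq).
- move=> v hv; rewrite E2 //; case/andP: hv => qv v1.
  apply: mulr_gt0; first by rewrite subr_gt0.
  by apply: Fs_gt0 => //; rewrite v1 (lt_trans q0).
- apply: (@sc_ext R _ (fun v => ln ((q - v) * Bs m r v))).
    by move=> v hv; rewrite E1.
  by apply: scB => //; exact: ltW.
- apply: (@sc_ext R _ (fun v => ln ((v - q) * (1 - Bs m r v)))).
    by move=> v hv; rewrite E2.
  by apply: scF => //; exact: ltW.
Qed.
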